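(* Let $N$ be a consistent observation machine from $Y$ to $Z$ and let $k=d(N)$. Let $X=Y\times\{0,\dots,k-1\}$, $\hat Y=Y\cup\{\bot\}$, $\hat Z=Z\cup\{\bot\}$, where $\bot$ is a fresh symbol. Then there exist Mealy machines $H$ from $X$ to $\hat Y$ and $M$ from $X$ to $\hat Z$ such that (1) $|S_H|=|S_M|=|S_N|+1$; (2) there exists a Mealy machine $T$ from $\hat Y$ to $\hat Z$ with $T\circ H\equiv M$; and (3) every Mealy machine $T$ from $\hat Y$ to $\hat Z$ with $T\circ H\equiv M$ satisfies $\lambda_T(\overline{y})=\lambda_N(\overline{y})$ for all $\overline{y}\in\Omega_N$.
   Context: An observation machine from $Y$ to $Z$ is a tuple $(Y,Z,S,D,\Delta,\lambda,r)$ with $S$ finite, $D\subseteq S\times Y$, $\Delta:D\to 2^S\setminus\{\emptyset\}$, $\lambda:D\to Z$, $r\in S$. A run on $y_0\dots y_n$ from $s_0$ is $s_0,y_0,z_0,s_1,\dots,s_{n+1}$ with $(s_i,y_i)\in D$, $s_{i+1}\in\Delta(s_i,y_i)$, $z_i=\lambda(s_i,y_i)$; $\Omega_N$ is the set of words having a run from $r$; $N$ is consistent if all runs from $r$ on each $\overline{y}\in\Omega_N$ have the same output word $\lambda_N(\overline{y})$. The degree is $d(N)=\max_{(s,y)\in D}|\Delta(s,y)|$. A Mealy machine from $X$ to $Y$ is $(X,Y,S,\delta,\lambda,r)$ with total $\delta:S\times X\to S$, $\lambda:S\times X\to Y$; $\lambda(\overline{x})$ is the output word from $r$. $T\circ H$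 is the cascade: states $S_H\times S_T$, initial $(r_H,r_T)$, and with $y=\lambda_H(s_H,x)$, $\delta((s_H,s_T),x)=(\delta_H(s_H,x),\delta_T(s_T,y))$, $\lambda((s_H,s_T),x)=\lambda_T(s_T,y)$; $\equiv$ means same output word on every input word. *)

(* Defs.v *)
From mathcomp Require Import all_boot.
Set Implicit Arguments. Unset Strict Implicit. Unset Printing Implicit Defensive.

(* Observation machine from Y to Z. The partial maps Delta, lam are total
   functions whose values outside the domain D are irrelevant. *)
Record obsMachine (Y Z : finType) := ObsMachine {
  oS : finType;
  oD : oS -> Y -> bool;
  oDelta : oS -> Y -> {set oS};
  olam : oS -> Y -> Z;
  or : oS;
  oDelta_ne : forall s y, oD s y -> oDelta s y != set0 }.

Section Obs.
Variables (Y Z : finType) (N : obsMachine Y Z).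

(* isRun s ys ss : s, ys_0, _, ss_0, ys_1, _, ss_1, ... is a run on ys from s;
   ss lists the states s_1 ... s_{n+1}. *)
Fixpoint isRun (s : oS N) (ys : seq Y) (ss : seq (oS N)) : Prop :=
  match ys, ss with
  | [::], [::] => True
  | y :: ys', s' :: ss' => @oD _ _ N s y /\ s' \in @oDelta _ _ N s y /\ isRun s' ys' ss'
  | _, _ => False
  end.

Fixpoint runOut (s : oS N) (ys : seq Y) (ss : seq (oS N)) : seq Z :=
  match ys, ss with
  | y :: ys', s' :: ss' => @olam _ _ N s y :: runOut s' ys' ss'
  | _, _ => [::]
  end.

Definition inOmega (ys : seq Y) : Prop := exists ss, isRun (@or _ _ N) ys ss.

Definition consistent : Prop :=
  forall ys ss1 ss2, isRun (@or _ _ N) ys ss1 -> isRun (@or _ _ N) ys ss2 ->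
    runOut (@or _ _ N) ys ss1 = runOut (@or _ _ N) ys ss2.

Definition degree : nat :=
  \max_(p : oS N * Y | @oD _ _ N p.1 p.2) #|@oDelta _ _ N p.1 p.2|.
End Obs.

Record mealy (X Y : finType) := Mealy {
  mS : finType;
  mdelta : mS -> X -> mS;
  mlam : mS -> X -> Y;
  mr : mS }.

Fixpoint moutFrom (X Y : finType) (M : mealy X Y) (s : mS M) (xs : seq X) : seq Y :=
  match xs with
  | [::] => [::]
  | x :: xs' => @mlam _ _ M s x :: moutFrom (@mdelta _ _ M s x) xs'
  end.

Definition mout (X Y : finType) (M : mealy X Y) (xs : seq X) : seq Y :=
  moutFrom (@mr _ _ M) xs.

Definition cascade (X Y W : finType) (T : mealy Y W) (H : mealy X Y) : mealy X W :=
  @Mealy X W (prod (mS H) (mS T))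
    (fun st x => (mdelta st.1 x, mdelta st.2 (mlam st.1 x)))
    (fun st x => mlam st.2 (mlam st.1 x))
    (mr H, mr T).

Definition mequiv (X Y : finType) (M1 M2 : mealy X Y) : Prop :=
  forall xs, mout M1 xs = mout M2 xs.

(* Main.v *)
Require Import Defs.
From mathcomp Require Import all_boot.
Set Implicit Arguments. Unset Strict Implicit. Unset Printing Implicit Defensive.

Section S.
Variables (Y Z : finType) (N : obsMachine Y Z).
Local Notation X := (prod Y 'I_(degree N)).

Definition stepN (s : oS N) (x : X) : option (oS N) :=
  if @oD _ _ N s x.1 && (val x.2 < #|@oDelta _ _ N s x.1|)
  then Some (nth s (enum (@oDelta _ _ N s x.1)) x.2) else None.

Definition Hm : mealy X (option Y) :=
  @Mealy X (option Y) (option (oS N))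
    (fun o x => if o is Some s then stepN s x else None)
    (fun o x => if o is Some s then (if stepN s x then Some x.1 else None) else None)
    (Some (or N)).

Definition Mm : mealy X (option Z) :=
  @Mealy X (option Z) (option (oS N))
    (fun o x => if o is Some s then stepN s x else None)
    (fun o x => if o is Some s then (if stepN s x then Some (@olam _ _ N s x.1) else None) else None)
    (Some (or N)).

Definition EA (A : {set oS N}) (y : Y) := [set s in A | @oD _ _ N s y].

Definition Tm : mealy (option Y) (option Z) :=
  @Mealy (option Y) (option Z) {set oS N}
    (fun A oy => if oy is Some y then \bigcup_(s in EA A y) @oDelta _ _ N s y else A)
    (fun A oy => if oy is Some y then
        (if [pick s in EA A y] is Some s then Some (@olam _ _ N s y) else None) else None)
    [set or N].

Lemma casc_out (X' Y' W : finType) (T : mealy Y' W) (H : mealy X' Y') h t xs :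
  moutFrom (M := cascade T H) (h, t) xs = moutFrom t (moutFrom h xs).
Proof. by elim: xs h t => //= x xs IH h t; rewrite IH. Qed.

Lemma isRun_size (s : oS N) ys ss : isRun s ys ss -> size ys = size ss.
Proof.
by elim: ys s ss => [|y ys IH] s [|s' ss] //= [_ [_ /IH ->]].
Qed.

Lemma isRun_rcons (s : oS N) ys ss y s' :
  isRun s ys ss -> @oD _ _ N (last s ss) y -> s' \in @oDelta _ _ N (last s ss) y ->
  isRun s (rcons ys y) (rcons ss s').
Proof.
elim: ys s ss => [|y0 ys IH] s [|s0 ss] //=.
all: try by [].
by move=> [? [? R]] ? ?; split => //; split => //; apply: IH.
Qed.

Lemma runOut_rcons (s : oS N) ys ss y s' : size ys = size ss ->
  runOut s (rcons ys y) (rcons ss s') = rcons (runOut s ys ss) (@olam _ _ N (last s ss) y).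
Proof.
elim: ys s ss => [|y0 ys IH] s [|s0 ss] //= [E]; by rewrite IH.
Qed.

Definition reach w (t : oS N) := exists ss, isRun (or N) w ss /\ last (or N) ss = t.

Lemma cons_lam (C : consistent N) w s1 s2 y :
  reach w s1 -> reach w s2 -> @oD _ _ N s1 y -> @oD _ _ N s2 y -> @olam _ _ N s1 y = @olam _ _ N s2 y.
Proof.
move=> [ss1 [R1 L1]] [ss2 [R2 L2]] D1 D2.
have /set0Pn [t1 T1] := oDelta_ne D1.
have /set0Pn [t2 T2] := oDelta_ne D2.
have R1' : isRun (or N) (rcons w y) (rcons ss1 t1) by apply: isRun_rcons => //; rewrite L1.
have R2' : isRun (or N) (rcons w y) (rcons ss2 t2) by apply: isRun_rcons => //; rewrite L2.
have := C _ _ _ R1' R2'.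
rewrite (runOut_rcons _ _ _ (isRun_size R1)) (runOut_rcons _ _ _ (isRun_size R2)) L1 L2.
by move/rcons_inj => [].
Qed.

Lemma main (C : consistent N) xs (hs : option (oS N)) (A : {set oS N}) w :
  (forall t, t \in A -> reach w t) ->
  (if hs is Some s then s \in A else true) ->
  moutFrom (M := cascade Tm Hm) (hs, A) xs = moutFrom (M := Mm) hs xs.
Proof.
elim: xs hs A w => [|x xs IH] hs A w HA Hs //=.
case: hs Hs => [s|] Hs /=; last by rewrite (IH None A w).
case E: (stepN s x) => [s'|] /=; last by rewrite (IH None A w).
move: E; rewrite /stepN; case: ifP => // /andP [D lt] [<-].
case: pickP => [s0 /setIdP [A0 D0]|/(_ s) /=]; last first.
  by rewrite /EA inE Hs D.
rewrite (cons_lam C (HA _ A0) (HA _ Hs) D0 D).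
congr (_ :: _); apply: (IH _ _ (rcons w x.1)).
- move=> t /bigcupP [s1 /setIdP [A1 D1] T1].
  have [ss [R L]] := HA _ A1.
  exists (rcons ss t); split; last by rewrite last_rcons.
  by apply: isRun_rcons => //; rewrite L.
- apply/bigcupP; exists s; first by rewrite /EA inE Hs D.
  by rewrite -mem_enum mem_nth // -cardE.
Qed.

End S.

Theorem lemma3 (Y Z : finType) (N : obsMachine Y Z) :
  consistent N ->
  exists (H : mealy (prod Y 'I_(degree N)) (option Y))
         (M : mealy (prod Y 'I_(degree N)) (option Z)),
    [/\ #|mS H| = #|oS N|.+1 /\ #|mS M| = #|oS N|.+1,
        (exists T : mealy (option Y) (option Z), mequiv (cascade T H) M) &
        forall T : mealy (option Y) (option Z), mequiv (cascade T H) M ->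
          forall (ys : seq Y) (ss : seq (oS N)), isRun (or N) ys ss ->
            mout T (map Some ys) = map Some (runOut (or N) ys ss)].
Proof.
move=> C; exists (Hm N), (Mm N); split.
- by rewrite /= card_option.
- exists (Tm N) => xs; rewrite /mout; apply: (@main _ _ N C _ _ _ [::]).
  + move=> t; rewrite inE => /eqP ->; by exists [::].
  + by rewrite /= set11.
move=> T HT ys ss R.
suff [xs [E1 E2]] : exists xs, moutFrom (M := Hm N) (Some (or N)) xs = map Some ys /\
   moutFrom (M := Mm N) (Some (or N)) xs = map Some (runOut (or N) ys ss).
  by rewrite -E1 -E2 -[RHS]/(mout _ xs) -HT /mout /= casc_out.
elim: ys (or N) ss R => [|y ys IH] s [|s' ss] //=; first by move=> _; exists [::].
move=> [D [In R]].
have [xs [E1 E2]] := IH _ _ R.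
have lt : index s' (enum (@oDelta _ _ N s y)) < #|@oDelta _ _ N s y|.
  by rewrite cardE index_mem mem_enum.
have ltd : index s' (enum (@oDelta _ _ N s y)) < degree N.
  apply: leq_trans lt _; exact: (leq_bigmax_cond (s, y)).
exists ((y, Ordinal ltd) :: xs).
have St : stepN (Y:=Y) (Z:=Z) (N:=N) s (y, Ordinal ltd) = Some s'.
  by rewrite /stepN /= D lt nth_index ?mem_enum.
by rewrite /= St E1 E2.
Qed.
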